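(* Let $F$ be WORDER or WMAJORITY with weights $w_1\ge\dots\ge w_n>0$. If SMO-GP-single on MO-$F$ is started with a non-redundant initial tree, then its expected optimization time is $O(n^3)$.
   Context: Fix an integer $n\ge 1$ and real weights $w_1\ge w_2\ge\dots\ge w_n>0$. The terminal set is $T=\{x_1,\bar x_1,\dots,x_n,\bar x_n\}$ ($\bar x_i$ is the complement of $x_i$; $x_i$ is called positive). A syntax tree is either the empty tree or a rooted ordered binary tree whose inner nodes are all labelled by the binary function $J$ (join, exactly two ordered children) and whose leaves are labelled by elements of $T$. The complexity $C(X)$ is the number of nodes of $X$ (0 for the empty tree). The leaf list $l$ of $X$ is the sequence of leaf labels in an inorder traversal. WORDER: build a list $S$ by scanning $l$ from front to rear and appending a literal only if neither it nor its complement is already in $S$; WORDER$(X)=\sum_{i:\,x_i\in S} w_i$; the expressed variables are the $x_i\in S$. WMAJORITY: WMAJORITY$(X)=\sum w_i$ over all $i$ such that $x_i$ occurs in $l$ at least once and at least as often as $\bar x_i$; these $x_i$ are the expressed variables. A tree is non-redundant if it is empty or if, with $k$ its number of expressed variables, its complexity is $2k-1$. MO-$F(X)=(F(X),C(X))$, $F$ maximized and $C$ minimized. Mutation (one HVL-Prime application): choose uniformly at random one of three operations. Substitute: replace a uniformly random leaf by a uniformly random $u\in T$. Insert: choose a uniformly random node $v$ and uniformly random $u\in T$, replace $v$ by a $J$-node with children $u$ and $v$ in uniformly random order (inserting into the empty tree yields the single leaf $u$). Delete: choose a uniformly random leaf $v$ with parent $p$ and sibling $u$, replace $p$ by $u$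 (deleting $p$ and $v$; deleting the only leaf of a one-leaf tree yields the empty tree). Dominance: $Y\succeq X$ iff $F(Y)\ge F(X)$ and $C(Y)\le C(X)$; $Y\succ X$ iff $Y\succeq X$ and ($F(Y)>F(X)$ or $C(Y)<C(X)$). A tree is Pareto optimal if no tree dominates it; the Pareto front is the set of objective vectors of Pareto optimal trees. SMO-GP-single: choose an initial tree $X$ and set $P:=\{X\}$; repeat: choose $X\in P$ uniformly at random, let $Y$ be $X$ after one HVL-Prime application; if no $Z\in P$ satisfies $Z\succ Y$, set $P:=(P\setminus\{Z\in P: Y\succeq Z\})\cup\{Y\}$. Expected optimization time: expected number of iterations until the population contains, for every objective vector in the Pareto front, a tree with that objective vector. *)

(* Defs.v *)
From Stdlib Require Import Reals List Arith Bool ClassicalEpsilon ClassicalDescription.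
Import ListNotations.
Open Scope R_scope.

(** Literals: (i, true) is the positive literal x_i, (i, false) is its
    complement. Variables are indexed 0..n-1 (paper: 1..n). *)
Definition lit : Type := (nat * bool)%type.

Inductive ntree : Type :=
| Leaf : lit -> ntree
| Join : ntree -> ntree -> ntree.

(** Syntax trees: None is the empty tree. *)
Definition stree : Type := option ntree.

Fixpoint nsize (t : ntree) : nat :=
  match t with Leaf _ => 1%nat | Join a b => S (nsize a + nsize b) end.

Fixpoint nleaves (t : ntree) : nat :=
  match t with Leaf _ => 1%nat | Join a b => (nleaves a + nleaves b)%nat end.

Fixpoint leaves (t : ntree) : list lit :=
  match t with Leaf l => [l] | Join a b => leaves a ++ leaves b end.

Definition cplx (X : stree) : nat :=
  match X with None => 0%nat | Some t => nsize t end.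

Definition leaflist (X : stree) : list lit :=
  match X with None => [] | Some t => leaves t end.

Definition valid (n : nat) (X : stree) : Prop :=
  forall l, In l (leaflist X) -> (fst l < n)%nat.

Inductive fitness : Type := WORDER | WMAJORITY.

Definition lit_eqb (a b : lit) : bool := Nat.eqb (fst a) (fst b) && Bool.eqb (snd a) (snd b).

(** WORDER list S: scan front to rear, append a literal if neither it nor its
    complement (i.e. no literal on the same variable) is already in S. *)
Definition worder_S (l : list lit) : list lit :=
  fold_left (fun S x => if existsb (fun y => Nat.eqb (fst y) (fst x)) S then S else S ++ [x]) l [].

Definition count_lit (x : lit) (l : list lit) : nat :=
  length (filter (lit_eqb x) l).

Definition expressed (F : fitness) (X : stree) (i : nat) : bool :=
  match F with
  | WORDER => existsb (lit_eqb (i, true)) (worder_S (leaflist X))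
  | WMAJORITY =>
      let cp := count_lit (i, true) (leaflist X) in
      let cn := count_lit (i, false) (leaflist X) in
      Nat.leb 1 cp && Nat.leb cn cp
  end.

Definition sumR (n : nat) (f : nat -> R) : R :=
  fold_right (fun i acc => f i + acc) 0 (seq 0 n).

Definition fit (F : fitness) (n : nat) (w : nat -> R) (X : stree) : R :=
  sumR n (fun i => if expressed F X i then w i else 0).

Definition nexpr (F : fitness) (n : nat) (X : stree) : nat :=
  length (filter (expressed F X) (seq 0 n)).

(** non-redundant: empty, or C(X) = 2k - 1 (written C(X) + 1 = 2k to avoid
    truncated subtraction) *)
Definition nonredundant (F : fitness) (n : nat) (X : stree) : Prop :=
  X = None \/ (cplx X + 1 = 2 * nexpr F n X)%nat.

Definition weights_ok (n : nat) (w : nat -> R) : Prop :=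
  (forall i, (i < n)%nat -> 0 < w i) /\
  (forall i, (S i < n)%nat -> w (S i) <= w i).

Definition wdom (F : fitness) (n : nat) (w : nat -> R) (Y X : stree) : Prop :=
  fit F n w X <= fit F n w Y /\ (cplx Y <= cplx X)%nat.
Definition sdom (F : fitness) (n : nat) (w : nat -> R) (Y X : stree) : Prop :=
  wdom F n w Y X /\ (fit F n w X < fit F n w Y \/ (cplx Y < cplx X)%nat).

Definition decb (P : Prop) : bool :=
  if excluded_middle_informative P then true else false.

Definition wdomb F n w Y X : bool := decb (wdom F n w Y X).
Definition sdomb F n w Y X : bool := decb (sdom F n w Y X).

Definition pareto_optimal (F : fitness) (n : nat) (w : nat -> R) (X : stree) : Prop :=
  valid n X /\ ~ (exists Y, valid n Y /\ sdom F n w Y X).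

Definition objv (F : fitness) (n : nat) (w : nat -> R) (X : stree) : R * nat :=
  (fit F n w X, cplx X).

Definition covers_front (F : fitness) (n : nat) (w : nat -> R) (P : list stree) : Prop :=
  forall X, pareto_optimal F n w X -> exists Z, In Z P /\ objv F n w Z = objv F n w X.

Definition dist (A : Type) : Type := list (R * A).

Definition dbind {A B : Type} (d : dist A) (k : A -> dist B) : dist B :=
  flat_map (fun pa => map (fun qb => (fst pa * fst qb, snd qb)) (k (snd pa))) d.

Definition terms (n : nat) : list lit :=
  flat_map (fun i => [(i, true); (i, false)]) (seq 0 n).

Fixpoint subst_leaf (t : ntree) (k : nat) (u : lit) : ntree :=
  match t with
  | Leaf _ => Leaf u
  | Join a b => if Nat.ltb k (nleaves a) then Join (subst_leaf a k u) b
                else Join a (subst_leaf b (k - nleaves a) u)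
  end.

(** apply f to the subtree rooted at the k-th node in preorder *)
Fixpoint at_node (t : ntree) (k : nat) (f : ntree -> ntree) : ntree :=
  match k, t with
  | O, _ => f t
  | S k', Join a b => if Nat.ltb k' (nsize a) then Join (at_node a k' f) b
                      else Join a (at_node b (k' - nsize a) f)
  | S _, Leaf _ => t
  end.

Fixpoint del_leaf (t : ntree) (k : nat) : option ntree :=
  match t with
  | Leaf _ => None
  | Join a b =>
      if Nat.ltb k (nleaves a) then
        match del_leaf a k with None => Some b | Some a' => Some (Join a' b) end
      else
        match del_leaf b (k - nleaves a) with None => Some a | Some b' => Some (Join a b') end
  end.

Definition third : R := / 3.

Definition mut_subst (n : nat) (X : stree) : dist stree :=
  match X with
  | None => [(1, None)]
  | Some t =>
      flat_map (fun k => map (fun u => (/ INR (nleaves t) * / INR (2 * n), Some (subst_leaf t k u)))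
                             (terms n)) (seq 0 (nleaves t))
  end.

Definition mut_insert (n : nat) (X : stree) : dist stree :=
  match X with
  | None => map (fun u => (/ INR (2 * n), Some (Leaf u))) (terms n)
  | Some t =>
      flat_map (fun k => flat_map (fun u =>
         map (fun b => (/ INR (nsize t) * / INR (2 * n) * / 2,
                        Some (at_node t k (fun v => if b : bool then Join (Leaf u) v else Join v (Leaf u)))))
             [true; false]) (terms n)) (seq 0 (nsize t))
  end.

Definition mut_delete (X : stree) : dist stree :=
  match X with
  | None => [(1, None)]
  | Some t => map (fun k => (/ INR (nleaves t), del_leaf t k)) (seq 0 (nleaves t))
  end.

Definition hvl_prime (n : nat) (X : stree) : dist stree :=
  map (fun pa => (third * fst pa, snd pa)) (mut_subst n X ++ mut_insert n X ++ mut_delete X).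

Definition update (F : fitness) (n : nat) (w : nat -> R) (P : list stree) (Y : stree) : list stree :=
  if existsb (fun Z => sdomb F n w Z Y) P then P
  else Y :: filter (fun Z => negb (wdomb F n w Y Z)) P.

Definition smo_step (F : fitness) (n : nat) (w : nat -> R) (P : list stree) : dist (list stree) :=
  dbind (map (fun X => (/ INR (length P), X)) P)
        (fun X => map (fun qy => (fst qy, update F n w P (snd qy))) (hvl_prime n X)).

(** states carry a flag "front already covered at some time <= t" *)
Definition coveredb F n w (P : list stree) : bool := decb (covers_front F n w P).

Fixpoint state_dist (F : fitness) (n : nat) (w : nat -> R) (X0 : stree) (t : nat)
  : dist (list stree * bool) :=
  match t with
  | O => [(1, ([X0], coveredb F n w [X0]))]
  | S t' => dbind (state_dist F n w X0 t')
              (fun s : list stree * bool => map (fun qP : R * list stree => (fst qP, (snd qP, orb (snd s) (coveredb F n w (snd qP)))))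
                            (smo_step F n w (fst s)))
  end.

(** Pr[T > t], T = number of iterations until the population covers the front *)
Definition prob_not_done (F : fitness) (n : nat) (w : nat -> R) (X0 : stree) (t : nat) : R :=
  fold_right (fun (ps : R * (list stree * bool)) (acc : R) => (if snd (snd ps) then 0 else fst ps) + acc) 0
             (state_dist F n w X0 t).

(** partial sums of E[T] = sum_{t >= 0} Pr[T > t] *)
Definition exp_time_partial (F : fitness) (n : nat) (w : nat -> R) (X0 : stree) (N : nat) : R :=
  sumR N (prob_not_done F n w X0).

(* Main.v *)
Require Import Defs.
From Stdlib Require Import Reals List Arith Bool Lia Lra Permutation ClassicalEpsilon ClassicalDescription Classical.
Import ListNotations.
Open Scope R_scope.

Definition Ex {A : Type} (d : Defs.dist A) (f : A -> R) : R :=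
  fold_right (fun pa acc => fst pa * f (snd pa) + acc) 0 d.
Arguments Ex : simpl never.

Lemma Ex_nil {A} (f : A -> R) : Ex [] f = 0.
Proof. reflexivity. Qed.
Lemma Ex_cons {A} (pa : R * A) d f : Ex (pa :: d) f = fst pa * f (snd pa) + Ex d f.
Proof. reflexivity. Qed.
Lemma Ex_app {A} (d1 d2 : Defs.dist A) f : Ex (d1 ++ d2) f = Ex d1 f + Ex d2 f.
Proof. induction d1; simpl. unfold Ex; simpl; lra. rewrite !Ex_cons, IHd1. lra. Qed.
Lemma Ex_flat_map {A B} (g : A -> Defs.dist B) l f :
  Ex (flat_map g l) f = fold_right (fun x acc => Ex (g x) f + acc) 0 l.
Proof. induction l; simpl. reflexivity. rewrite Ex_app, IHl. reflexivity. Qed.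
Lemma Ex_map_scale {A} (c : R) (d : Defs.dist A) f :
  Ex (map (fun qb => (c * fst qb, snd qb)) d) f = c * Ex d f.
Proof. induction d; simpl. unfold Ex; simpl; lra. rewrite !Ex_cons, IHd. simpl. lra. Qed.
Lemma Ex_dbind {A B} (d : Defs.dist A) (k : A -> Defs.dist B) f :
  Ex (dbind d k) f = Ex d (fun a => Ex (k a) f).
Proof.
  unfold dbind. rewrite Ex_flat_map. induction d; simpl. reflexivity.
  rewrite IHd. rewrite Ex_cons. f_equal.
  apply (Ex_map_scale (fst a) (k (snd a)) f).
Qed.
Lemma Ex_map {A B} (g : A -> B) (d : Defs.dist A) f :
  Ex (map (fun pa => (fst pa, g (snd pa))) d) f = Ex d (fun a => f (g a)).
Proof. induction d; simpl. reflexivity. rewrite !Ex_cons, IHd. reflexivity. Qed.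

Definition nonnegd {A} (d : Defs.dist A) := forall pa, In pa d -> 0 <= fst pa.

Lemma Ex_le {A} (d : Defs.dist A) f g : nonnegd d ->
  (forall pa, In pa d -> f (snd pa) <= g (snd pa)) -> Ex d f <= Ex d g.
Proof.
  induction d; intros Hn H; simpl. unfold Ex; simpl; lra.
  rewrite !Ex_cons. assert (0 <= fst a) by (apply Hn; left; auto).
  assert (f (snd a) <= g (snd a)) by (apply H; left; auto).
  assert (Ex d f <= Ex d g). apply IHd. intros pa Hp; apply Hn; right; auto.
  intros pa Hp; apply H; right; auto.
  nra.
Qed.
Lemma Ex_ge0 {A} (d : Defs.dist A) f : nonnegd d ->
  (forall pa, In pa d -> 0 <= f (snd pa)) -> 0 <= Ex d f.
Proof.
  intros. replace 0 with (Ex d (fun _ => 0)). apply Ex_le; auto.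
  clear. induction d; simpl; auto. rewrite Ex_cons, IHd. lra.
Qed.
Lemma Ex_lin {A} (d : Defs.dist A) f a b :
  Ex d (fun x => a * f x + b) = a * Ex d f + b * Ex d (fun _ => 1).
Proof. induction d; simpl. unfold Ex; simpl; lra. rewrite !Ex_cons, IHd. lra. Qed.
Lemma Ex_ext {A} (d : Defs.dist A) f g : (forall x, f x = g x) -> Ex d f = Ex d g.
Proof. intros H. induction d; simpl; auto. rewrite !Ex_cons, IHd, H. auto. Qed.

Lemma inv_nonneg x : 0 <= x -> 0 <= / x.
Proof. intros H. destruct (Req_dec x 0). subst. rewrite Rinv_0; lra.
  left. apply Rinv_0_lt_compat. lra. Qed.

Definition lsum {A} (l : list A) (f : A -> R) := fold_right (fun x acc => f x + acc) 0 l.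
Arguments lsum : simpl never.
Lemma lsum_cons {A} (a : A) l f : lsum (a :: l) f = f a + lsum l f.
Proof. reflexivity. Qed.
Lemma lsum_nil {A} (f : A -> R) : lsum [] f = 0.
Proof. reflexivity. Qed.

Lemma Ex_flat_map' {A B} (g : A -> Defs.dist B) l f : Ex (flat_map g l) f = lsum l (fun x => Ex (g x) f).
Proof. apply Ex_flat_map. Qed.

Lemma lsum_const {A} (l : list A) c : lsum l (fun _ => c) = INR (length l) * c.
Proof. induction l; simpl. rewrite lsum_nil; lra. rewrite lsum_cons, IHl. destruct (length l); simpl; lra. Qed.
Lemma lsum_ext {A} (l : list A) f g : (forall x, In x l -> f x = g x) -> lsum l f = lsum l g.
Proof. induction l; simpl; intros; auto. rewrite !lsum_cons, H, IHl; auto. Qed.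
Lemma lsum_le {A} (l : list A) f g : (forall x, In x l -> f x <= g x) -> lsum l f <= lsum l g.
Proof. induction l; simpl; intros. rewrite !lsum_nil; lra. rewrite !lsum_cons. assert (f a <= g a) by auto.
  assert (lsum l f <= lsum l g) by auto. lra. Qed.
Lemma lsum_ge0 {A} (l : list A) f : (forall x, In x l -> 0 <= f x) -> 0 <= lsum l f.
Proof. induction l; intros H. rewrite lsum_nil; lra. rewrite lsum_cons.
  assert (0 <= f a) by (apply H; left; auto).
  assert (0 <= lsum l f) by (apply IHl; intros; apply H; right; auto). lra. Qed.
Lemma lsum_ge_one {A} (l : list A) f x0 : In x0 l -> (forall x, In x l -> 0 <= f x) -> f x0 <= lsum l f.
Proof. induction l; simpl; intros H H0. contradiction.
  rewrite lsum_cons. assert (0 <= lsum l f) by (apply lsum_ge0; auto).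
  destruct H. subst. lra. assert (f x0 <= lsum l f) by auto.
  assert (0 <= f a) by auto. lra. Qed.

Lemma Ex_map_const {A B} (c : R) (g : A -> B) l f :
  Ex (map (fun x => (c, g x)) l) f = c * lsum l (fun x => f (g x)).
Proof. induction l; simpl. unfold Ex, lsum; simpl; lra. rewrite Ex_cons, IHl, lsum_cons. simpl. lra. Qed.

Lemma sumR_S n f : sumR (S n) f = sumR n f + f n.
Proof. unfold sumR. rewrite seq_S, fold_right_app. simpl.
  generalize (f n). generalize (seq 0 n). intros l r. induction l; simpl; lra. Qed.
Lemma sumR_le n f g : (forall i, (i < n)%nat -> f i <= g i) -> sumR n f <= sumR n g.
Proof. induction n; intros H. unfold sumR; simpl; lra. rewrite !sumR_S.
  assert (f n <= g n) by (apply H; lia). assert (sumR n f <= sumR n g) by (apply IHn; intros; apply H; lia). lra. Qed.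
Lemma sumR_lt n f g i0 : (forall i, (i < n)%nat -> f i <= g i) -> (i0 < n)%nat -> f i0 < g i0 -> sumR n f < sumR n g.
Proof. induction n; intros H Hi Hs. lia. rewrite !sumR_S.
  destruct (Nat.eq_dec i0 n). subst.
  assert (sumR n f <= sumR n g) by (apply sumR_le; intros; apply H; lia). lra.
  assert (f n <= g n) by (apply H; lia). assert (sumR n f < sumR n g) by (apply IHn; auto; try lia; intros; apply H; lia). lra. Qed.
Lemma sumR_plus n f g : sumR n (fun i => f i + g i) = sumR n f + sumR n g.
Proof. induction n. unfold sumR; simpl; lra. rewrite !sumR_S, IHn. lra. Qed.
Lemma sumR_ext n f g : (forall i, (i < n)%nat -> f i = g i) -> sumR n f = sumR n g.
Proof. induction n; intros H. reflexivity. rewrite !sumR_S, IHn, H; auto. Qed.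
Lemma sumR_single n u a : (u < n)%nat -> sumR n (fun i => if Nat.eqb i u then a else 0) = a.
Proof. induction n; intros H. lia. rewrite sumR_S. destruct (Nat.eq_dec u n).
  subst. rewrite Nat.eqb_refl. rewrite (sumR_ext _ _ (fun _ => 0)).
  replace (sumR n (fun _ => 0)) with 0. lra. clear. induction n. reflexivity. rewrite sumR_S, <- IHn; lra.
  intros. destruct (Nat.eqb_spec i n); try lia; auto.
  destruct (Nat.eqb_spec n u); try lia. rewrite IHn; try lia. lra. Qed.

Lemma leaves_length t : length (leaves t) = nleaves t.
Proof. induction t; simpl; auto. rewrite length_app; lia. Qed.
Lemma nsize_nleaves t : (nsize t + 1 = 2 * nleaves t)%nat.
Proof. induction t; simpl; lia. Qed.
Lemma nleaves_pos t : (1 <= nleaves t)%nat.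
Proof. induction t; simpl; lia. Qed.

Definition nl (X : stree) : nat := match X with None => 0%nat | Some t => nleaves t end.
Lemma leaflist_length X : length (leaflist X) = nl X.
Proof. destruct X; simpl; auto. apply leaves_length. Qed.
Lemma cplx_nl X : cplx X = (2 * nl X - 1)%nat.
Proof. destruct X; simpl; auto. pose proof (nsize_nleaves n). lia. Qed.
Lemma nl0 X : nl X = 0%nat -> X = None.
Proof. destruct X; simpl; auto. pose proof (nleaves_pos n); lia. Qed.
Lemma cplx_le X Y : (cplx X <= cplx Y)%nat <-> (nl X <= nl Y)%nat.
Proof. rewrite !cplx_nl. destruct (Nat.eq_dec (nl X) 0).
  - rewrite e. split; lia.
  - split; lia. Qed.
Lemma cplx_lt X Y : (cplx X < cplx Y)%nat <-> (nl X < nl Y)%nat.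
Proof. rewrite !cplx_nl. destruct (Nat.eq_dec (nl X) 0).
  - rewrite e. split; lia.
  - split; lia. Qed.
Lemma cplx_eq X Y : cplx X = cplx Y <-> nl X = nl Y.
Proof. rewrite !cplx_nl. destruct (Nat.eq_dec (nl X) 0); destruct (Nat.eq_dec (nl Y) 0); split; lia. Qed.

Lemma subst_leaf_leaves t k u : (k < nleaves t)%nat ->
  exists a x b, leaves t = a ++ x :: b /\ leaves (subst_leaf t k u) = a ++ u :: b.
Proof.
  revert k; induction t; intros k Hk; simpl in *.
  - exists [], l, []; auto.
  - destruct (Nat.ltb_spec k (nleaves t1)).
    + destruct (IHt1 k H) as (a & x & b & H1 & H2). exists a, x, (b ++ leaves t2).
      simpl. rewrite H1, H2, <- !app_assoc. auto.
    + destruct (IHt2 (k - nleaves t1)%nat) as (a & x & b & H1 & H2). lia.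
      exists (leaves t1 ++ a), x, b. simpl. rewrite H1, H2, <- !app_assoc. auto.
Qed.
Lemma subst_leaf_nsize t k u : nsize (subst_leaf t k u) = nsize t.
Proof. revert k; induction t; intros k; simpl; auto. destruct (Nat.ltb k (nleaves t1)); simpl; auto. Qed.

Definition insf (u : lit) (b : bool) (v : ntree) : ntree := if b then Join (Leaf u) v else Join v (Leaf u).

Lemma at_node_ins t k u b : (k < nsize t)%nat ->
  exists a c, leaves t = a ++ c /\ leaves (at_node t k (insf u b)) = a ++ u :: c /\
    nsize (at_node t k (insf u b)) = (nsize t + 2)%nat.
Proof.
  revert k; induction t; intros k Hk; destruct k; simpl in *.
  - destruct b; simpl. exists [], [l]; auto. exists [l], []; auto.
  - exfalso; lia.
  - destruct b; simpl. exists [], (leaves t1 ++ leaves t2); repeat split; auto; lia.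
    exists (leaves t1 ++ leaves t2), []; rewrite app_nil_r; repeat split; auto; lia.
  - destruct (Nat.ltb_spec k (nsize t1)).
    + destruct (IHt1 k H) as (a & c & H1 & H2 & H3). exists a, (c ++ leaves t2).
      simpl. rewrite H1, H2, H3, <- !app_assoc. repeat split; auto; lia.
    + destruct (IHt2 (k - nsize t1)%nat) as (a & c & H1 & H2 & H3). lia.
      exists (leaves t1 ++ a), c. simpl. rewrite H1, H2, H3, <- !app_assoc. repeat split; auto; lia.
Qed.

Lemma del_leaf_leaves t k : (k < nleaves t)%nat ->
  exists a x b, leaves t = a ++ x :: b /\ leaflist (del_leaf t k) = a ++ b.
Proof.
  revert k; induction t; intros k Hk; simpl in *.
  - exists [], l, []; auto.
  - destruct (Nat.ltb_spec k (nleaves t1)).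
    + destruct (IHt1 k H) as (a & x & b & H1 & H2).
      destruct (del_leaf t1 k) eqn:E; simpl in *.
      * exists a, x, (b ++ leaves t2). rewrite H1, H2, <- !app_assoc. auto.
      * destruct a; [|discriminate]. destruct b; [|discriminate].
        exists [], x, (leaves t2). rewrite H1. auto.
    + destruct (IHt2 (k - nleaves t1)%nat) as (a & x & b & H1 & H2). lia.
      destruct (del_leaf t2 (k - nleaves t1)) eqn:E; simpl in *.
      * exists (leaves t1 ++ a), x, b. rewrite H1, H2, <- !app_assoc. auto.
      * destruct a; [|discriminate]. destruct b; [|discriminate].
        exists (leaves t1), x, []. rewrite H1, app_nil_r. auto.
Qed.

Lemma lit_eqb_true a b : lit_eqb a b = true <-> a = b.
Proof. unfold lit_eqb. destruct a as [i s], b as [j t]; simpl.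
  rewrite andb_true_iff, Nat.eqb_eq, eqb_true_iff. split. intros [-> ->]; auto. intros H; inversion H; auto. Qed.

Definition wstep (S : list lit) (x : lit) : list lit :=
  if existsb (fun y => Nat.eqb (fst y) (fst x)) S then S else S ++ [x].

Lemma wfold_sub l S0 y : In y (fold_left wstep l S0) -> In y S0 \/ In y l.
Proof. revert S0; induction l; simpl; intros S0 H; auto.
  destruct (IHl _ H) as [H1|H1]; auto. unfold wstep in H1.
  destruct existsb; auto. apply in_app_or in H1. destruct H1 as [H1|[H1|[]]]; auto. Qed.
Lemma wfold_mono l S0 y : In y S0 -> In y (fold_left wstep l S0).
Proof. revert S0; induction l; simpl; intros S0 H; auto. apply IHl. unfold wstep.
  destruct existsb; auto. apply in_or_app; auto. Qed.
Lemma wfold_cov l S0 x : In x l -> exists y, In y (fold_left wstep l S0) /\ fst y = fst x.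
Proof. revert S0; induction l; simpl; intros S0 H. contradiction.
  destruct H; auto. subst. unfold wstep at 2. destruct existsb eqn:E.
  - apply existsb_exists in E. destruct E as (y & Hy & He). apply Nat.eqb_eq in He.
    exists y. split; auto. apply wfold_mono; auto.
  - exists x. split; auto. apply wfold_mono. apply in_or_app. right; left; auto. Qed.
Lemma worder_S_eq l : worder_S l = fold_left wstep l [].
Proof. reflexivity. Qed.

Lemma count_pos x l : (1 <= count_lit x l)%nat <-> In x l.
Proof. unfold count_lit. induction l; simpl. split; [lia|tauto].
  destruct (lit_eqb x a) eqn:E; simpl. apply lit_eqb_true in E. subst. split; auto. lia.
  rewrite IHl. split; auto. intros [H|H]; auto. subst. assert (lit_eqb x x = true) by (apply lit_eqb_true; auto). congruence. Qed.

Lemma G1 F X i : expressed F X i = true -> In (i, true) (leaflist X).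
Proof. destruct F; unfold expressed.
  - intros H. apply existsb_exists in H. destruct H as (y & Hy & He). apply lit_eqb_true in He. subst.
    rewrite worder_S_eq in Hy. apply wfold_sub in Hy. destruct Hy; auto. contradiction.
  - intros H. apply andb_true_iff in H. destruct H as [H _]. apply Nat.leb_le in H. apply count_pos; auto. Qed.

Definition allpos (l : list lit) := forall x, In x l -> snd x = true.

Lemma G2 F X i : allpos (leaflist X) -> In (i, true) (leaflist X) -> expressed F X i = true.
Proof. intros Hp Hi. destruct F; unfold expressed.
  - apply existsb_exists. rewrite worder_S_eq. destruct (wfold_cov _ [] _ Hi) as (y & Hy & He).
    exists y. split; auto. apply lit_eqb_true. destruct y as [j s]. simpl in He. subst.
    destruct (wfold_sub _ _ _ Hy) as [[]|Hy']. apply Hp in Hy'. simpl in Hy'. subst; auto.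
  - apply andb_true_iff. split. apply Nat.leb_le, count_pos; auto.
    apply Nat.leb_le. assert (count_lit (i,false) (leaflist X) = 0%nat).
    { destruct (count_lit (i,false) (leaflist X)) eqn:E; auto. assert (In (i,false) (leaflist X)) by (apply count_pos; lia).
      apply Hp in H. discriminate. } lia. Qed.

Lemma G2' F X i : allpos (leaflist X) -> expressed F X i = true <-> In (i, true) (leaflist X).
Proof. split. apply G1. apply G2; auto. Qed.

Definition good n X := valid n X /\ allpos (leaflist X) /\ NoDup (map fst (leaflist X)).

Lemma w_pos n w i : weights_ok n w -> (i < n)%nat -> 0 < w i.
Proof. intros [H _]; auto. Qed.

Lemma fit_le F n w X Y : weights_ok n w -> allpos (leaflist X) ->
  (forall i, (i < n)%nat -> In (i,true) (leaflist Y) -> In (i,true) (leaflist X)) ->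
  fit F n w Y <= fit F n w X.
Proof. intros Hw Hp H. unfold fit. apply sumR_le. intros i Hi.
  pose proof (w_pos n w i Hw Hi).
  destruct (expressed F Y i) eqn:E1. apply G1 in E1. rewrite (G2 F X i Hp (H i Hi E1)). lra.
  destruct (expressed F X i); lra. Qed.

Lemma fit_lt F n w X Y i0 : weights_ok n w -> allpos (leaflist X) ->
  (forall i, (i < n)%nat -> In (i,true) (leaflist Y) -> In (i,true) (leaflist X)) ->
  (i0 < n)%nat -> In (i0,true) (leaflist X) -> ~ In (i0,true) (leaflist Y) ->
  fit F n w Y < fit F n w X.
Proof. intros Hw Hp H Hi0 HX HY. unfold fit. apply sumR_lt with i0; auto.
  intros i Hi. pose proof (w_pos n w i Hw Hi).
  destruct (expressed F Y i) eqn:E1. apply G1 in E1. rewrite (G2 F X i Hp (H i Hi E1)). lra.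
  destruct (expressed F X i); lra.
  rewrite (G2 F X i0 Hp HX). destruct (expressed F Y i0) eqn:E. apply G1 in E. contradiction.
  apply w_pos with n; auto. Qed.

Lemma in_terms u n : In u (terms n) -> (fst u < n)%nat.
Proof. unfold terms. intros H. apply in_flat_map in H. destruct H as (i & Hi & H).
  apply in_seq in Hi. destruct H as [<-|[<-|[]]]; simpl; lia. Qed.
Lemma terms_in i b n : (i < n)%nat -> In (i, b) (terms n).
Proof. intros H. unfold terms. apply in_flat_map. exists i. split. apply in_seq; lia.
  destruct b; simpl; auto. Qed.

Lemma map_fst_in l i : In i (map fst l) -> allpos l -> In (i, true) l.
Proof. intros H Hp. apply in_map_iff in H. destruct H as ([j s] & <- & H).
  pose proof (Hp _ H). simpl in *. subst. auto. Qed.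

Lemma ins_case F n w X Y a c u : weights_ok n w -> good n X ->
  leaflist X = a ++ c -> leaflist Y = a ++ u :: c -> (fst u < n)%nat ->
  (cplx X < cplx Y)%nat -> good n Y \/ sdom F n w X Y.
Proof.
  intros Hw [Hv [Hp Hd]] HX HY Hu Hc.
  assert (Hvy : valid n Y). { intros l Hl. rewrite HY in Hl. apply in_app_or in Hl.
    destruct Hl as [Hl|[<-|Hl]]; auto; apply Hv; rewrite HX; apply in_or_app; auto. }
  destruct (snd u) eqn:Eu; [destruct (in_dec Nat.eq_dec (fst u) (map fst (a ++ c))) as [Hin|Hnin]|].
  - right. split. split; [|lia]. apply fit_le; auto. intros i Hi Hl. rewrite HY in Hl.
    apply in_app_or in Hl. destruct Hl as [Hl|[Hl|Hl]].
    rewrite HX; apply in_or_app; auto.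
    subst u. simpl in Hin. apply map_fst_in; auto. rewrite HX; auto.
    rewrite HX; apply in_or_app; auto.
    right; auto.
  - left. split; auto. split.
    + intros l Hl. rewrite HY in Hl. apply in_app_or in Hl. destruct Hl as [Hl|[<-|Hl]]; auto;
      apply Hp; rewrite HX; apply in_or_app; auto.
    + rewrite HY. rewrite map_app. simpl. apply NoDup_app_remove_l with (l := []). simpl.
      apply Permutation_NoDup with (fst u :: map fst a ++ map fst c).
      apply Permutation_middle. rewrite HX, map_app in Hd. rewrite map_app in Hnin. constructor; auto.
  - right. split. split; [|lia]. apply fit_le; auto. intros i Hi Hl. rewrite HY in Hl.
    apply in_app_or in Hl. destruct Hl as [Hl|[Hl|Hl]].
    rewrite HX; apply in_or_app; auto.
    subst u. discriminate.
    rewrite HX; apply in_or_app; auto.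
    right; auto.
Qed.

Lemma sub_case F n w X Y a x b u : weights_ok n w -> good n X ->
  leaflist X = a ++ x :: b -> leaflist Y = a ++ u :: b -> (fst u < n)%nat ->
  cplx Y = cplx X -> good n Y \/ sdom F n w X Y.
Proof.
  intros Hw [Hv [Hp Hd]] HX HY Hu Hc.
  assert (Hvy : valid n Y). { intros l Hl. rewrite HY in Hl. apply in_app_or in Hl.
    destruct Hl as [Hl|[<-|Hl]]; auto; apply Hv; rewrite HX; apply in_or_app; simpl; auto. }
  rewrite HX, map_app in Hd. simpl in Hd.
  assert (Hd2 := NoDup_remove_2 _ _ _ Hd). assert (Hd1 := NoDup_remove_1 _ _ _ Hd).
  rewrite <- map_app in Hd1, Hd2.
  assert (Hx : x = (fst x, true)). { destruct x as [j s]. simpl. f_equal. apply (Hp (j,s)). rewrite HX. apply in_or_app; simpl; auto. }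
  assert (Hxn : (fst x < n)%nat). { apply Hv. rewrite HX. apply in_or_app; simpl; auto. }
  assert (Hsub : forall l, In l (a ++ b) -> In l (leaflist X)).
  { intros l Hl. rewrite HX. apply in_app_or in Hl; apply in_or_app. destruct Hl; simpl; auto. }
  destruct (snd u) eqn:Eu; [destruct (in_dec Nat.eq_dec (fst u) (map fst (a ++ b))) as [Hin|Hnin]|].
  - right. split. split; [|lia]. 
    + apply fit_le; auto. intros i Hi Hl. rewrite HY in Hl.
      apply in_app_or in Hl. destruct Hl as [Hl|[Hl|Hl]].
      apply Hsub, in_or_app; auto.
      subst u. simpl in Hin. apply Hsub. apply map_fst_in; auto. intros l Hl; apply Hp, Hsub; auto.
      apply Hsub, in_or_app; auto.
    + left. apply fit_lt with (fst x); auto.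
      * intros i Hi Hl. rewrite HY in Hl.
        apply in_app_or in Hl. destruct Hl as [Hl|[Hl|Hl]].
        apply Hsub, in_or_app; auto.
        subst u. simpl in Hin. apply Hsub. apply map_fst_in; auto. intros l Hl; apply Hp, Hsub; auto.
        apply Hsub, in_or_app; auto.
      * rewrite HX, <- Hx. apply in_or_app; simpl; auto.
      * intros Hl. rewrite HY in Hl. apply in_app_or in Hl. destruct Hl as [Hl|[Hl|Hl]].
        apply Hd2. rewrite map_app. apply in_or_app. left. apply (in_map fst) in Hl; auto.
        subst u. apply Hd2. auto.
        apply Hd2. rewrite map_app. apply in_or_app. right. apply (in_map fst) in Hl; auto.
  - left. split; auto. split.
    + intros l Hl. rewrite HY in Hl. apply in_app_or in Hl. destruct Hl as [Hl|[<-|Hl]]; auto;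
      apply Hp, Hsub, in_or_app; auto.
    + rewrite HY. rewrite map_app. simpl. apply NoDup_app_remove_l with (l := []). simpl.
      apply Permutation_NoDup with (fst u :: map fst a ++ map fst b).
      apply Permutation_middle. rewrite map_app in Hd1, Hnin. constructor; auto.
  - right. split. split; [|lia].
    + apply fit_le; auto. intros i Hi Hl. rewrite HY in Hl.
      apply in_app_or in Hl. destruct Hl as [Hl|[Hl|Hl]].
      apply Hsub, in_or_app; auto. subst u; discriminate. apply Hsub, in_or_app; auto.
    + left. apply fit_lt with (fst x); auto.
      * intros i Hi Hl. rewrite HY in Hl.
        apply in_app_or in Hl. destruct Hl as [Hl|[Hl|Hl]].
        apply Hsub, in_or_app; auto. subst u; discriminate. apply Hsub, in_or_app; auto.
      * rewrite HX, <- Hx. apply in_or_app; simpl; auto.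
      * intros Hl. rewrite HY in Hl. apply in_app_or in Hl. destruct Hl as [Hl|[Hl|Hl]].
        apply Hd2. rewrite map_app. apply in_or_app. left. apply (in_map fst) in Hl; auto.
        subst u. discriminate.
        apply Hd2. rewrite map_app. apply in_or_app. right. apply (in_map fst) in Hl; auto.
Qed.

Lemma del_case n X Y a x b : good n X ->
  leaflist X = a ++ x :: b -> leaflist Y = a ++ b -> good n Y.
Proof.
  intros [Hv [Hp Hd]] HX HY.
  assert (Hsub : forall l, In l (a ++ b) -> In l (leaflist X)).
  { intros l Hl. rewrite HX. apply in_app_or in Hl; apply in_or_app. destruct Hl; simpl; auto. }
  split; [|split].
  - intros l Hl. rewrite HY in Hl. apply Hv, Hsub; auto.
  - intros l Hl. rewrite HY in Hl. apply Hp, Hsub; auto.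
  - rewrite HY. rewrite HX, map_app in Hd. simpl in Hd. apply NoDup_remove_1 in Hd. rewrite map_app; auto.
Qed.

Definition child (n : nat) (X Y : stree) : Prop :=
  match X with
  | None => Y = None \/ exists u, In u (terms n) /\ Y = Some (Leaf u)
  | Some t =>
      (exists k u, (k < nleaves t)%nat /\ In u (terms n) /\ Y = Some (subst_leaf t k u)) \/
      (exists k u b, (k < nsize t)%nat /\ In u (terms n) /\ Y = Some (at_node t k (insf u b))) \/
      (exists k, (k < nleaves t)%nat /\ Y = del_leaf t k)
  end.

Lemma hvl_child n X qy : In qy (hvl_prime n X) -> child n X (snd qy).
Proof.
  unfold hvl_prime. intros H. apply in_map_iff in H. destruct H as (pa & <- & H). simpl.
  apply in_app_or in H. destruct H as [H|H]; [|apply in_app_or in H; destruct H as [H|H]].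
  - destruct X as [t|]; simpl in *.
    + left. apply in_flat_map in H. destruct H as (k & Hk & H). apply in_map_iff in H.
      destruct H as (u & <- & Hu). apply in_seq in Hk. exists k, u. simpl. repeat split; auto; lia.
    + left. destruct H as [<-|[]]; auto.
  - destruct X as [t|]; simpl in *.
    + right; left. apply in_flat_map in H. destruct H as (k & Hk & H). apply in_flat_map in H.
      destruct H as (u & Hu & H). apply in_seq in Hk.
      destruct H as [<-|[<-|[]]]; simpl.
      exists k, u, true. repeat split; auto; lia.
      exists k, u, false. repeat split; auto; lia.
    + right. apply in_map_iff in H. destruct H as (u & <- & Hu). exists u; auto.
  - destruct X as [t|]; simpl in *.
    + right; right. apply in_map_iff in H. destruct H as (k & <- & Hk). apply in_seq in Hk.
      exists k. simpl. split; auto; lia.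
    + left. destruct H as [<-|[]]; auto.
Qed.

Lemma child_good F n w X Y : weights_ok n w -> good n X -> child n X Y -> good n Y \/ sdom F n w X Y.
Proof.
  intros Hw Hg Hc. destruct X as [t|]; simpl in Hc.
  - destruct Hc as [(k & u & Hk & Hu & ->)|[(k & u & b & Hk & Hu & ->)|(k & Hk & ->)]].
    + destruct (subst_leaf_leaves t k u Hk) as (a & x & b & H1 & H2).
      apply sub_case with a x b u; auto. apply in_terms; auto. simpl. apply subst_leaf_nsize.
    + destruct (at_node_ins t k u b Hk) as (a & c & H1 & H2 & H3).
      apply ins_case with a c u; auto. apply in_terms; auto. simpl. lia.
    + destruct (del_leaf_leaves t k Hk) as (a & x & b & H1 & H2).
      left. apply del_case with (Some t) a x b; auto.
  - destruct Hc as [->|(u & Hu & ->)].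
    + left; auto.
    + apply ins_case with [] [] u; auto. apply in_terms; auto.
Qed.

Lemma child_valid n X Y : valid n X -> child n X Y -> valid n Y.
Proof.
  intros Hv Hc. destruct X as [t|]; simpl in Hc.
  - destruct Hc as [(k & u & Hk & Hu & ->)|[(k & u & b & Hk & Hu & ->)|(k & Hk & ->)]].
    + destruct (subst_leaf_leaves t k u Hk) as (a & x & b & H1 & H2).
      intros l Hl. simpl in Hl. rewrite H2 in Hl. apply in_app_or in Hl. destruct Hl as [Hl|[<-|Hl]].
      apply Hv. simpl. rewrite H1. apply in_or_app; auto. apply in_terms; auto.
      apply Hv. simpl. rewrite H1. apply in_or_app; simpl; auto.
    + destruct (at_node_ins t k u b Hk) as (a & c & H1 & H2 & H3).
      intros l Hl. simpl in Hl. rewrite H2 in Hl. apply in_app_or in Hl. destruct Hl as [Hl|[<-|Hl]].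
      apply Hv. simpl. rewrite H1. apply in_or_app; auto. apply in_terms; auto.
      apply Hv. simpl. rewrite H1. apply in_or_app; simpl; auto.
    + destruct (del_leaf_leaves t k Hk) as (a & x & b & H1 & H2).
      intros l Hl. rewrite H2 in Hl. apply in_app_or in Hl. destruct Hl as [Hl|Hl];
      apply Hv; simpl; rewrite H1; apply in_or_app; simpl; auto.
  - destruct Hc as [->|(u & Hu & ->)]. intros l []. intros l [<-|[]]. apply in_terms; auto.
Qed.

Lemma decb_spec (P : Prop) : decb P = true <-> P.
Proof. unfold decb. destruct excluded_middle_informative; split; auto; discriminate. Qed.
Lemma decb_false (P : Prop) : decb P = false <-> ~ P.
Proof. unfold decb. destruct excluded_middle_informative; split; auto; try discriminate; tauto. Qed.

Section S.
Variable F : fitness.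
Variable n : nat.
Variable w : nat -> R.
Hypothesis Hw : weights_ok n w.

Definition accepted (P : list stree) Y := ~ exists Z, In Z P /\ sdom F n w Z Y.

Lemma existsb_sdom P Y : existsb (fun Z => sdomb F n w Z Y) P = true <-> exists Z, In Z P /\ sdom F n w Z Y.
Proof. rewrite existsb_exists. unfold sdomb. split; intros (Z & H1 & H2); exists Z; split; auto; apply decb_spec; auto. Qed.

Lemma update_cases P Y : (update F n w P Y = P /\ ~ accepted P Y) \/
  (accepted P Y /\ update F n w P Y = Y :: filter (fun Z => negb (wdomb F n w Y Z)) P).
Proof. unfold update. destruct existsb eqn:E.
  - left. split; auto. apply existsb_sdom in E. intros H; apply H; auto.
  - right. split; auto. intros H. apply existsb_sdom in H. congruence. Qed.

Lemma U_in P Y Z : In Z (update F n w P Y) -> In Z P \/ Z = Y.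
Proof. destruct (update_cases P Y) as [[-> _]|[_ ->]]. left; auto.
  intros [<-|H]. right; auto. apply filter_In in H. tauto. Qed.
Lemma U_keep P Y Z : In Z P -> In Z (update F n w P Y) \/ (In Y (update F n w P Y) /\ wdom F n w Y Z).
Proof. intros HZ. destruct (update_cases P Y) as [[-> _]|[_ ->]]. left; auto.
  destruct (wdomb F n w Y Z) eqn:E.
  - right. split. left; auto. unfold wdomb in E. apply (proj1 (decb_spec _)) in E; auto.
  - left. right. apply filter_In. rewrite E; auto. Qed.
Lemma U_acc P Y : accepted P Y -> In Y (update F n w P Y).
Proof. intros H. destruct (update_cases P Y) as [[_ H1]|[_ ->]]. contradiction. left; auto. Qed.

Definition Inv (P : list stree) := P <> [] /\ (forall Z, In Z P -> good n Z) /\ NoDup (map nl P).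

Lemma nodup_map_filter {A B} (g : A -> B) f (l : list A) : NoDup (map g l) -> NoDup (map g (filter f l)).
Proof. induction l; simpl; intros H; auto. inversion H; subst. destruct (f a); simpl; auto.
  constructor; auto. intros Hin. apply H2. apply in_map_iff in Hin. destruct Hin as (x & <- & Hx).
  apply filter_In in Hx. apply in_map; tauto. Qed.

Lemma Inv_update P X Y : Inv P -> In X P -> child n X Y -> Inv (update F n w P Y).
Proof.
  intros [Hne [Hg Hd]] HX Hc. destruct (update_cases P Y) as [[-> _]|[Ha ->]].
  - split; auto.
  - split; [discriminate|split].
    + intros Z [<-|HZ]. destruct (child_good F n w X Y Hw (Hg X HX) Hc); auto.
      exfalso; apply Ha; exists X; auto. apply filter_In in HZ. apply Hg; tauto.
    + simpl. constructor. 2: apply nodup_map_filter; auto.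
      intros Hin. apply in_map_iff in Hin. destruct Hin as (Z & Hn & HZ). apply filter_In in HZ.
      destruct HZ as [HZ Hwd]. apply negb_true_iff in Hwd. unfold wdomb in Hwd. apply (proj1 (decb_false _)) in Hwd.
      apply Ha. exists Z. split; auto.
      assert (cplx Z = cplx Y) by (apply cplx_eq; auto).
      assert (~ fit F n w Z <= fit F n w Y). { intros Hle. apply Hwd. split; auto. lia. }
      split. split. lra. lia. left; lra.
Qed.

Lemma good_nl Z : good n Z -> (nl Z <= n)%nat.
Proof. intros [Hv [_ Hd]]. rewrite <- leaflist_length. rewrite <- (length_map (@fst nat bool)).
  rewrite <- (length_seq n 0). apply NoDup_incl_length; auto. intros i Hi.
  apply in_map_iff in Hi. destruct Hi as (l & <- & Hl). apply in_seq. split; [lia|]. simpl. apply Hv; auto. Qed.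

Lemma Inv_length P : Inv P -> (length P <= S n)%nat.
Proof. intros [_ [Hg Hd]]. rewrite <- (length_map nl). rewrite <- (length_seq (S n) 0).
  apply NoDup_incl_length; auto. intros i Hi. apply in_map_iff in Hi. destruct Hi as (Z & <- & HZ).
  apply in_seq. pose proof (good_nl Z (Hg Z HZ)). lia. Qed.

Definition opt j Z := pareto_optimal F n w Z /\ nl Z = j.
Definition covered (P : list stree) j := exists Z, In Z P /\ opt j Z.

Lemma persist P Y j : valid n Y -> covered P j -> covered (update F n w P Y) j.
Proof.
  intros Hv (Z & HZ & [HP Hn]). destruct (U_keep P Y Z HZ) as [H|[H Hwd]].
  - exists Z; split; [|split]; auto.
  - exists Y. split; auto.
    destruct HP as [HvZ HnZ].
    assert (~ sdom F n w Y Z) by (intros Hs; apply HnZ; exists Y; auto).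
    destruct Hwd as [H1 H2].
    assert (fit F n w Y = fit F n w Z) by (destruct (Rle_lt_or_eq_dec _ _ H1); auto; exfalso; apply H0; split; [split|]; auto).
    assert (cplx Y = cplx Z) by (destruct (Nat.eq_dec (cplx Y) (cplx Z)); auto; exfalso; apply H0; split; [split|]; auto; right; lia).
    split. split; auto. intros (W & HW & Hs). apply HnZ. exists W. split; auto.
    unfold sdom, wdom in *. rewrite <- H3, <- H4. auto.
    rewrite <- Hn. apply cplx_eq; auto.
Qed.

Fixpoint mkt (i : nat) (l : list nat) : ntree :=
  match l with [] => Leaf (i, true) | j :: l' => Join (Leaf (i, true)) (mkt j l') end.
Definition mkl (l : list nat) : stree := match l with [] => None | i :: l' => Some (mkt i l') end.
Lemma mkl_leaves l : leaflist (mkl l) = map (fun i => (i, true)) l.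
Proof. destruct l as [|i l]; simpl; auto. revert i; induction l; intros i; simpl; auto. rewrite IHl; auto. Qed.
Lemma mkl_nl l : nl (mkl l) = length l.
Proof. rewrite <- leaflist_length, mkl_leaves, length_map; auto. Qed.

Definition Se (e : nat -> bool) := sumR n (fun i => if e i then w i else 0).
Definition card (e : nat -> bool) := length (filter e (seq 0 n)).
Definition me e := mkl (filter e (seq 0 n)).

Lemma me_valid e : valid n (me e).
Proof. intros l Hl. unfold me in Hl. rewrite mkl_leaves in Hl. apply in_map_iff in Hl.
  destruct Hl as (i & <- & Hi). apply filter_In in Hi. destruct Hi as [Hi _]. apply in_seq in Hi. simpl; lia. Qed.
Lemma me_nl e : nl (me e) = card e.
Proof. unfold me. rewrite mkl_nl; auto. Qed.
Lemma me_fit e : fit F n w (me e) = Se e.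
Proof. unfold fit, Se. apply sumR_ext. intros i Hi.
  assert (Hp : allpos (leaflist (me e))). { intros l Hl. unfold me in Hl. rewrite mkl_leaves in Hl.
    apply in_map_iff in Hl. destruct Hl as (j & <- & _). auto. }
  destruct (expressed F (me e) i) eqn:E1; destruct (e i) eqn:E2; auto.
  - apply G1 in E1. unfold me in E1. rewrite mkl_leaves in E1. apply in_map_iff in E1.
    destruct E1 as (j & Hj & Hin). inversion Hj; subst. apply filter_In in Hin. destruct Hin; congruence.
  - rewrite G2 in E1; auto. discriminate. unfold me. rewrite mkl_leaves. apply in_map_iff. exists i. split; auto. apply filter_In.
    split; auto. apply in_seq; lia.
Qed.

Lemma sdom_intro Y X : fit F n w X <= fit F n w Y -> (cplx Y <= cplx X)%nat ->
  (fit F n w X < fit F n w Y \/ (cplx Y < cplx X)%nat) -> sdom F n w Y X.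
Proof. intros; split; [split|]; auto. Qed.

Lemma pareto_bound Z e : pareto_optimal F n w Z -> (card e <= nl Z)%nat ->
  Se e <= fit F n w Z /\ ((card e < nl Z)%nat -> Se e < fit F n w Z).
Proof.
  intros [HvZ HnZ] Hc. split.
  - destruct (Rle_or_lt (Se e) (fit F n w Z)); auto. exfalso. apply HnZ. exists (me e).
    split. apply me_valid. apply sdom_intro; rewrite ?me_fit. lra. apply cplx_le. rewrite me_nl; auto.
    left; lra.
  - intros Hlt. destruct (Rle_or_lt (fit F n w Z) (Se e)); auto. exfalso. apply HnZ. exists (me e).
    split. apply me_valid. apply sdom_intro; rewrite ?me_fit. lra. apply cplx_le. rewrite me_nl; lia.
    right. apply cplx_lt. rewrite me_nl; auto.
Qed.

Lemma card_expr W : (card (expressed F W) <= nl W)%nat.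
Proof. unfold card. rewrite <- leaflist_length. rewrite <- (length_map (@fst nat bool)).
  apply NoDup_incl_length. apply NoDup_filter, seq_NoDup.
  intros i Hi. apply filter_In in Hi. destruct Hi as [_ Hi]. apply G1 in Hi.
  apply (in_map fst) in Hi. auto. Qed.

Lemma card_le_n e : (card e <= n)%nat.
Proof. unfold card. rewrite <- (length_seq n 0) at 2. apply filter_length_le. Qed.

Lemma pareto_nl X : pareto_optimal F n w X -> (nl X <= n)%nat.
Proof. intros [Hv Hn]. destruct (Nat.le_gt_cases (nl X) n); auto. exfalso. apply Hn.
  exists (me (expressed F X)). split. apply me_valid. apply sdom_intro; rewrite ?me_fit.
  unfold Se, fit; lra. apply cplx_le. rewrite me_nl. pose proof (card_le_n (expressed F X)). lia.
  right. apply cplx_lt. rewrite me_nl. pose proof (card_le_n (expressed F X)). lia. Qed.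

Lemma all_covered_front P : (forall j, (j <= n)%nat -> covered P j) -> covers_front F n w P.
Proof.
  intros H X HX. destruct (H (nl X) (pareto_nl X HX)) as (Z & HZ & [HPZ HnZ]).
  exists Z. split; auto. unfold objv.
  assert (Hc : cplx Z = cplx X) by (apply cplx_eq; auto). rewrite Hc. f_equal.
  destruct HX as [HvX HnX]. destruct HPZ as [HvZ HnZ'].
  destruct (Rtotal_order (fit F n w Z) (fit F n w X)) as [Hl|[He|Hl]]; auto; exfalso.
  apply HnZ'. exists X. split; auto. apply sdom_intro; try lra; try lia.
  apply HnX. exists Z. split; auto. apply sdom_intro; try lra; try lia.
Qed.

Lemma none_pareto : pareto_optimal F n w None.
Proof. split. intros l []. intros (W & _ & [[H1 H2] H3]). simpl in H2.
  destruct W as [t|]. simpl in H2. pose proof (nsize_nleaves t); pose proof (nleaves_pos t); lia.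
  destruct H3. lra. lia. Qed.

End S.

Section S.
Variable F : fitness.
Variable n : nat.
Variable w : nat -> R.
Hypothesis Hw : weights_ok n w.

Lemma filter_remove (e : nat -> bool) u l : NoDup l -> In u l -> e u = true ->
  length (filter e l) = S (length (filter (fun i => e i && negb (Nat.eqb i u)) l)).
Proof.
  induction l; intros Hd Hin He. contradiction. inversion Hd; subst. simpl.
  destruct Hin as [->|Hin].
  - rewrite He, Nat.eqb_refl. simpl. f_equal. apply f_equal. apply filter_ext_in.
    intros i Hi. destruct (Nat.eqb_spec i u); subst; try contradiction. rewrite andb_true_r; auto.
  - destruct (Nat.eqb_spec a u). subst; contradiction. rewrite andb_true_r.
    destruct (e a); simpl; auto.
Qed.

Lemma card_remove e u : (u < n)%nat -> e u = true ->
  card n e = S (card n (fun i => e i && negb (Nat.eqb i u))).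
Proof. intros. unfold card. apply filter_remove; auto. apply seq_NoDup. apply in_seq; lia. Qed.

Lemma Se_remove e u : (u < n)%nat -> e u = true ->
  Se n w e = Se n w (fun i => e i && negb (Nat.eqb i u)) + w u.
Proof. intros Hu He. unfold Se. rewrite <- (sumR_single n u (w u) Hu). rewrite <- sumR_plus.
  apply sumR_ext. intros i Hi. destruct (Nat.eqb_spec i u). subst. rewrite He. simpl. lra.
  rewrite andb_true_r. lra. Qed.

Lemma good_expr X i : good n X -> expressed F X i = true <-> In (i, true) (leaflist X).
Proof. intros [_ [Hp _]]. apply G2'; auto. Qed.

Lemma build Z Y v : good n Z -> pareto_optimal F n w Z -> (v < n)%nat ->
  ~ In v (map fst (leaflist Z)) ->
  (forall i, (i < n)%nat -> ~ In i (map fst (leaflist Z)) -> w i <= w v) ->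
  good n Y -> (forall i, In (i, true) (leaflist Y) <-> i = v \/ In (i, true) (leaflist Z)) ->
  nl Y = S (nl Z) -> pareto_optimal F n w Y.
Proof.
  intros HgZ HPZ Hv Hvn Hmax HgY HY HnY.
  assert (HpZ : allpos (leaflist Z)) by apply HgZ.
  assert (Hfit : fit F n w Y = fit F n w Z + w v).
  { unfold fit. rewrite <- (sumR_single n v (w v) Hv). rewrite <- sumR_plus. apply sumR_ext.
    intros i Hi. destruct (Nat.eqb_spec i v).
    - subst. assert (expressed F Y v = true) by (apply good_expr; auto; apply HY; auto).
      assert (expressed F Z v = false). { destruct (expressed F Z v) eqn:E; auto.
        apply G1 in E. exfalso. apply Hvn. apply (in_map fst) in E. auto. }
      rewrite H, H0. lra.
    - destruct (expressed F Y i) eqn:E1; destruct (expressed F Z i) eqn:E2; try lra.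
      + apply good_expr in E1; auto. apply HY in E1. destruct E1 as [E1|E1]; [contradiction|].
        apply (good_expr Z i HgZ) in E1. congruence.
      + apply (good_expr Z i HgZ) in E2. assert (In (i,true) (leaflist Y)) by (apply HY; auto).
        apply (good_expr Y i HgY) in H. congruence. }
  assert (Hwv : 0 < w v) by (apply w_pos with n; auto).
  split. apply HgY. intros (W & HvW & [[Hf Hc] Hor]).
  set (e := expressed F W). assert (HSe : Se n w e = fit F n w W) by reflexivity.
  pose proof (card_expr F n W) as Hce. fold e in Hce.
  apply cplx_le in Hc. 
  destruct (classic (exists u, (u < n)%nat /\ e u = true /\ (u = v \/ ~ In u (map fst (leaflist Z))))) as
    [(u & Hu & Heu & Huv)|Hno].
  - assert (Hwu : w u <= w v). { destruct Huv as [->|Huv]. lra. apply Hmax; auto. }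
    set (e' := fun i => e i && negb (Nat.eqb i u)).
    pose proof (card_remove e u Hu Heu) as Hc'. fold e' in Hc'.
    pose proof (Se_remove e u Hu Heu) as HS'. fold e' in HS'.
    destruct (pareto_bound F n w Z e' HPZ) as [B1 B2]. lia.
    assert (Se n w e <= fit F n w Y) by lra.
    destruct Hor as [Hor|Hor]. lra.
    apply cplx_lt in Hor. assert (Se n w e' < fit F n w Z) by (apply B2; lia). lra.
  - assert (Hsub : forall u, In u (filter e (seq 0 n)) -> In u (map fst (leaflist Z))).
    { intros u Hu. apply filter_In in Hu. destruct Hu as [Hu1 Hu2]. apply in_seq in Hu1.
      apply NNPP. intros Hnot. apply Hno. exists u. repeat split; auto. lia. }
    assert (card n e <= nl Z)%nat.
    { unfold card. rewrite <- leaflist_length, <- (length_map (@fst nat bool)).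
      apply NoDup_incl_length; auto. apply NoDup_filter, seq_NoDup. }
    destruct (pareto_bound F n w Z e HPZ H) as [B1 _]. lra.
Qed.

Lemma weights_dec i j : (i <= j)%nat -> (j < n)%nat -> w j <= w i.
Proof. intros Hij Hj. induction j. replace i with 0%nat by lia. lra.
  destruct (Nat.eq_dec i (S j)). subst; lra. destruct Hw as [_ H].
  assert (w (S j) <= w j) by (apply H; auto). assert (w j <= w i) by (apply IHj; lia). lra. Qed.

Lemma min_missing (V : list nat) : (length V < n)%nat -> NoDup V ->
  exists v, (v < n)%nat /\ ~ In v V /\ forall i, (i < n)%nat -> ~ In i V -> (v <= i)%nat.
Proof.
  intros Hl Hd.
  assert (Hex : exists i, (i < n)%nat /\ ~ In i V).
  { apply NNPP. intros Hno. assert (incl (seq 0 n) V).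
    { intros i Hi. apply in_seq in Hi. apply NNPP. intros H. apply Hno. exists i. split; auto; lia. }
    apply NoDup_incl_length in H. rewrite length_seq in H. lia. apply seq_NoDup. }
  destruct Hex as (i & Hi & HiV).
  revert Hi HiV. pattern i. apply (well_founded_induction lt_wf). intros j IH Hj HjV.
  destruct (classic (exists k, (k < j)%nat /\ ~ In k V)) as [(k & Hk & HkV)|Hno].
  - apply (IH k); auto. lia.
  - exists j. repeat split; auto. intros k Hk HkV. destruct (Nat.le_gt_cases j k); auto.
    exfalso. apply Hno. exists k; auto.
Qed.
End S.

Lemma length_terms n : length (terms n) = (2 * n)%nat.
Proof. unfold terms. rewrite <- (length_seq n 0) at 2. generalize (seq 0 n). induction l; simpl; auto. lia. Qed.

Lemma INR_gt0 k : (1 <= k)%nat -> 0 < INR k.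
Proof. intros. apply lt_0_INR. lia. Qed.

Lemma nsize_pos t : (1 <= nsize t)%nat.
Proof. pose proof (nsize_nleaves t); pose proof (nleaves_pos t); lia. Qed.

Section S.
Variable n : nat.
Hypothesis Hn : (1 <= n)%nat.

Lemma third_pos : 0 < third.
Proof. unfold third; lra. Qed.

Lemma hvl_nonneg X : nonnegd (hvl_prime n X).
Proof.
  intros pa H. unfold hvl_prime in H. apply in_map_iff in H. destruct H as (qa & <- & H). simpl.
  pose proof third_pos. apply Rmult_le_pos; [lra|].
  apply in_app_or in H. destruct H as [H|H]; [|apply in_app_or in H; destruct H as [H|H]].
  - destruct X as [t|]; simpl in H.
    + apply in_flat_map in H. destruct H as (k & _ & H). apply in_map_iff in H. destruct H as (u & <- & _). simpl.
      apply Rmult_le_pos; apply inv_nonneg, pos_INR.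
    + destruct H as [<-|[]]; simpl; lra.
  - destruct X as [t|]; simpl in H.
    + apply in_flat_map in H. destruct H as (k & _ & H). apply in_flat_map in H. destruct H as (u & _ & H).
      destruct H as [<-|[<-|[]]]; simpl; repeat apply Rmult_le_pos; try apply inv_nonneg; try apply pos_INR; lra.
    + apply in_map_iff in H. destruct H as (u & <- & _). simpl. apply inv_nonneg, pos_INR.
  - destruct X as [t|]; simpl in H.
    + apply in_map_iff in H. destruct H as (k & <- & _). simpl. apply inv_nonneg, pos_INR.
    + destruct H as [<-|[]]; simpl; lra.
Qed.

Lemma Ex_hvl X f : Ex (hvl_prime n X) f = third * (Ex (mut_subst n X) f + Ex (mut_insert n X) f + Ex (mut_delete X) f).
Proof. unfold hvl_prime. rewrite Ex_map_scale, !Ex_app. ring. Qed.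

Lemma Ex_subst_t t f : Ex (mut_subst n (Some t)) f =
  lsum (seq 0 (nleaves t)) (fun k => / INR (nleaves t) * / INR (2 * n) *
     lsum (terms n) (fun u => f (Some (subst_leaf t k u)))).
Proof. simpl. rewrite Ex_flat_map'. apply lsum_ext. intros k _.
  rewrite (Ex_map_const (/ INR (nleaves t) * / INR (2 * n)) (fun u => Some (subst_leaf t k u))). auto. Qed.

Lemma Ex_ins_t t f : Ex (mut_insert n (Some t)) f =
  lsum (seq 0 (nsize t)) (fun k => lsum (terms n) (fun u =>
    / INR (nsize t) * / INR (2 * n) * / 2 * lsum [true; false] (fun b => f (Some (at_node t k (insf u b)))))).
Proof. unfold mut_insert. rewrite Ex_flat_map'. apply lsum_ext. intros k _. rewrite Ex_flat_map'. apply lsum_ext. intros u _.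
  unfold Ex, lsum, insf; simpl; ring. Qed.

Lemma Ex_ins_none f : Ex (mut_insert n None) f = / INR (2 * n) * lsum (terms n) (fun u => f (Some (Leaf u))).
Proof. simpl. rewrite (Ex_map_const (/ INR (2 * n)) (fun u => Some (Leaf u))). auto. Qed.

Lemma Ex_del_t t f : Ex (mut_delete (Some t)) f = / INR (nleaves t) * lsum (seq 0 (nleaves t)) (fun k => f (del_leaf t k)).
Proof. simpl. rewrite (Ex_map_const (/ INR (nleaves t)) (fun k => del_leaf t k)). auto. Qed.

Lemma INR2n : 0 < INR (2 * n).
Proof. apply INR_gt0. lia. Qed.

Lemma hvl_mass X : Ex (hvl_prime n X) (fun _ => 1) = 1.
Proof.
  rewrite Ex_hvl. pose proof INR2n. destruct X as [t|].
  - rewrite Ex_subst_t, Ex_ins_t, Ex_del_t.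
    pose proof (INR_gt0 _ (nleaves_pos t)). pose proof (INR_gt0 _ (nsize_pos t)).
    rewrite (lsum_ext _ _ (fun _ => / INR (nleaves t) * / INR (2 * n) * (INR (2*n) * 1))).
    2: { intros; rewrite lsum_const, length_terms; auto. }
    rewrite lsum_const, length_seq.
    rewrite (lsum_ext _ _ (fun _ => INR (2*n) * (/ INR (nsize t) * / INR (2 * n) * / 2 * 2))).
    2: { intros. rewrite lsum_const, length_terms. rewrite (lsum_const [true;false]). simpl. ring. }
    rewrite lsum_const, length_seq, lsum_const, length_seq.
    unfold third. field. lra.
  - unfold mut_subst, mut_insert, mut_delete. rewrite (Ex_map_const (/ INR (2 * n)) (fun u => Some (Leaf u))). rewrite lsum_const, length_terms, !Ex_cons, !Ex_nil.
    cbn [fst snd]. unfold third. field. lra.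
Qed.

Lemma Ex_hvl_ge0 X f : (forall Y, 0 <= f Y) -> 0 <= Ex (hvl_prime n X) f.
Proof. intros. apply Ex_ge0. apply hvl_nonneg. auto. Qed.

Lemma comp_ge0 d (f : stree -> R) : nonnegd d -> (forall Y, 0 <= f Y) -> 0 <= Ex d f.
Proof. intros. apply Ex_ge0; auto. Qed.

Lemma subst_nonneg X : nonnegd (mut_subst n X).
Proof. intros pa H. destruct X as [t|]; simpl in H.
  + apply in_flat_map in H. destruct H as (k & _ & H). apply in_map_iff in H. destruct H as (u & <- & _). simpl.
    apply Rmult_le_pos; apply inv_nonneg, pos_INR.
  + destruct H as [<-|[]]; simpl; lra. Qed.
Lemma ins_nonneg X : nonnegd (mut_insert n X).
Proof. intros pa H. destruct X as [t|]; simpl in H.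
    + apply in_flat_map in H. destruct H as (k & _ & H). apply in_flat_map in H. destruct H as (u & _ & H).
      destruct H as [<-|[<-|[]]]; simpl; repeat apply Rmult_le_pos; try apply inv_nonneg; try apply pos_INR; lra.
    + apply in_map_iff in H. destruct H as (u & <- & _). simpl. apply inv_nonneg, pos_INR. Qed.
Lemma del_nonneg X : nonnegd (mut_delete X).
Proof. intros pa H. destruct X as [t|]; simpl in H.
    + apply in_map_iff in H. destruct H as (k & <- & _). simpl. apply inv_nonneg, pos_INR.
    + destruct H as [<-|[]]; simpl; lra. Qed.

Lemma ins_bound X f v : (v < n)%nat -> (forall Y, 0 <= f Y) ->
  (match X with
   | None => f (Some (Leaf (v, true))) = 1
   | Some t => forall k b, (k < nsize t)%nat -> f (Some (at_node t k (insf (v, true) b))) = 1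
   end) -> third * / INR (2 * n) <= Ex (hvl_prime n X) f.
Proof.
  intros Hv Hf HX. rewrite Ex_hvl. pose proof third_pos. pose proof INR2n.
  assert (0 <= Ex (mut_subst n X) f) by (apply Ex_ge0; auto; apply subst_nonneg).
  assert (0 <= Ex (mut_delete X) f) by (apply Ex_ge0; auto; apply del_nonneg).
  assert (/ INR (2 * n) <= Ex (mut_insert n X) f).
  { destruct X as [t|].
    - rewrite Ex_ins_t. pose proof (INR_gt0 _ (nsize_pos t)).
      assert (Hin : forall k, In k (seq 0 (nsize t)) ->
        / INR (nsize t) * / INR (2 * n) <= lsum (terms n) (fun u =>
          / INR (nsize t) * / INR (2 * n) * / 2 * lsum [true; false] (fun b => f (Some (at_node t k (insf u b)))))).
      { intros k Hk. apply in_seq in Hk.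
        eapply Rle_trans; [|apply lsum_ge_one with (x0 := (v, true))].
        - rewrite !lsum_cons, lsum_nil, !HX; try lia. lra.
        - apply terms_in; auto.
        - intros u _. apply Rmult_le_pos. repeat apply Rmult_le_pos; try apply inv_nonneg; try apply pos_INR; lra.
          rewrite !lsum_cons, lsum_nil. pose proof (Hf (Some (at_node t k (insf u true)))).
          pose proof (Hf (Some (at_node t k (insf u false)))). lra. }
      apply lsum_le in Hin. rewrite lsum_const, length_seq in Hin.
      apply Rle_trans with (INR (nsize t) * (/ INR (nsize t) * / INR (2 * n))). right; field; lra. exact Hin.
    - rewrite Ex_ins_none. pose proof (lsum_ge_one (terms n) (fun u => f (Some (Leaf u))) (v, true)) as HL.
      cbv beta in HL. rewrite HX in HL. assert (1 <= lsum (terms n) (fun u => f (Some (Leaf u)))).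
      apply HL. apply terms_in; auto. intros; auto.
      assert (0 < / INR (2 * n)) by (apply Rinv_0_lt_compat; lra). nra. }
  assert (0 <= Ex (mut_insert n X) f) by (pose proof (Rinv_0_lt_compat _ INR2n); lra).
  apply Rmult_le_compat_l; lra.
Qed.

Lemma del_bound t f : (forall Y, 0 <= f Y) -> (forall k, (k < nleaves t)%nat -> f (del_leaf t k) = 1) ->
  third <= Ex (hvl_prime n (Some t)) f.
Proof.
  intros Hf HX. rewrite Ex_hvl. pose proof third_pos.
  assert (0 <= Ex (mut_subst n (Some t)) f) by (apply Ex_ge0; auto; apply subst_nonneg).
  assert (0 <= Ex (mut_insert n (Some t)) f) by (apply Ex_ge0; auto; apply ins_nonneg).
  assert (Ex (mut_delete (Some t)) f = 1).
  { rewrite Ex_del_t. rewrite (lsum_ext _ _ (fun _ => 1)). rewrite lsum_const, length_seq.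
    pose proof (INR_gt0 _ (nleaves_pos t)). field. lra. intros k Hk. apply in_seq in Hk. apply HX. lia. }
  rewrite H2. nra.
Qed.
End S.

Lemma flen_mono {A} (f g : A -> bool) l : (forall x, In x l -> f x = true -> g x = true) ->
  (length (filter f l) <= length (filter g l))%nat.
Proof. induction l; simpl; intros H; auto.
  destruct (f a) eqn:E1. rewrite (H a (or_introl eq_refl) E1). simpl. apply le_n_S, IHl; auto.
  destruct (g a); simpl; [apply le_S|]; apply IHl; auto. Qed.
Lemma flen_strict {A} (f g : A -> bool) l x0 : (forall x, In x l -> f x = true -> g x = true) ->
  In x0 l -> f x0 = false -> g x0 = true -> (length (filter f l) < length (filter g l))%nat.
Proof. induction l; simpl; intros H Hx Hf Hg; [contradiction|].
  destruct Hx as [->|Hx].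
  - rewrite Hf, Hg. simpl. apply le_n_S. apply flen_mono; auto.
  - destruct (f a) eqn:E1. rewrite (H a (or_introl eq_refl) E1). simpl. apply le_n_S, IHl; auto.
    destruct (g a); simpl; [apply le_S|]; apply IHl; auto. Qed.
Lemma flen_full {A} (f : A -> bool) l : length (filter f l) = length l -> forall x, In x l -> f x = true.
Proof. induction l; simpl; intros H x Hx; [contradiction|].
  pose proof (filter_length_le f l).
  destruct (f a) eqn:E; simpl in H; [|lia]. destruct Hx as [->|Hx]; auto. Qed.

Lemma ins_good n X Y a c u : good n X ->
  leaflist X = a ++ c -> leaflist Y = a ++ u :: c -> (fst u < n)%nat -> snd u = true ->
  ~ In (fst u) (map fst (a ++ c)) -> good n Y.
Proof.
  intros [Hv [Hp Hd]] HX HY Hu Eu Hnin.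
  split; [|split].
  - intros l Hl. rewrite HY in Hl. apply in_app_or in Hl.
    destruct Hl as [Hl|[<-|Hl]]; auto; apply Hv; rewrite HX; apply in_or_app; auto.
  - intros l Hl. rewrite HY in Hl. apply in_app_or in Hl. destruct Hl as [Hl|[<-|Hl]]; auto;
      apply Hp; rewrite HX; apply in_or_app; auto.
  - rewrite HY. rewrite map_app. simpl. apply NoDup_app_remove_l with (l := []). simpl.
    apply Permutation_NoDup with (fst u :: map fst a ++ map fst c).
    apply Permutation_middle. rewrite HX, map_app in Hd. rewrite map_app in Hnin. constructor; auto.
Qed.

Section S.
Variable F : fitness.
Variable n : nat.
Variable w : nat -> R.
Hypothesis Hw : weights_ok n w.
Hypothesis Hn : (1 <= n)%nat.

Definition minl (P : list stree) : nat := fold_right (fun Z m => Nat.min (nl Z) m) n P.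
Lemma minl_le P Z : In Z P -> (minl P <= nl Z)%nat.
Proof. induction P; simpl; intros H; [contradiction|]. destruct H as [->|H]. lia. specialize (IHP H). lia. Qed.
Lemma minl_le_n P : (minl P <= n)%nat.
Proof. induction P; simpl; lia. Qed.
Lemma minl_ach P : P <> [] -> (forall Z, In Z P -> (nl Z <= n)%nat) -> exists Z, In Z P /\ nl Z = minl P.
Proof. induction P; intros Hne Hb; [congruence|]. simpl.
  destruct P as [|b P].
  - exists a. split; auto. simpl. pose proof (Hb a (or_introl eq_refl)). lia.
  - destruct IHP as (Z & HZ & HZe). discriminate. intros; apply Hb; right; auto.
    destruct (Nat.le_gt_cases (nl a) (minl (b :: P))).
    + exists a. split; auto. lia.
    + exists Z. split; auto. rewrite HZe. lia. Qed.

Definition cnt (P : list stree) : nat := length (filter (fun j => decb (covered F n w P j)) (seq 0 (S n))).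
Lemma cnt_le P : (cnt P <= S n)%nat.
Proof. unfold cnt. rewrite <- (length_seq (S n) 0) at 2. apply filter_length_le. Qed.

Lemma cnt_full P : (cnt P = S n) -> covers_front F n w P.
Proof. intros H. apply all_covered_front. intros j Hj. unfold cnt in H.
  rewrite <- (length_seq (S n) 0) in H at 2. pose proof (flen_full _ _ H j).
  apply (proj1 (decb_spec _)). apply H0. apply in_seq; lia. Qed.

Definition gP (P : list stree) : R := INR (3 * S n) * INR (minl P) + INR (6 * n * S n) * (INR (S n) - INR (cnt P)).

Lemma gP_ge0 P : 0 <= gP P.
Proof. unfold gP. pose proof (cnt_le P). apply le_INR in H.
  pose proof (pos_INR (3 * S n)). pose proof (pos_INR (minl P)). pose proof (pos_INR (6 * n * S n)). nra. Qed.

Lemma step_support P qP : In qP (smo_step F n w P) ->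
  exists X Y, In X P /\ child n X Y /\ snd qP = update F n w P Y.
Proof.
  unfold smo_step, dbind. intros H. apply in_flat_map in H. destruct H as (pa & Hpa & H).
  apply in_map_iff in Hpa. destruct Hpa as (X & <- & HX). simpl in H.
  apply in_map_iff in H. destruct H as (qb & <- & H). apply in_map_iff in H. destruct H as (qy & <- & H).
  exists X, (snd qy). simpl. repeat split; auto. apply hvl_child in H; auto. Qed.

Lemma step_nonneg P : nonnegd (smo_step F n w P).
Proof.
  unfold smo_step, dbind. intros qP H. apply in_flat_map in H. destruct H as (pa & Hpa & H).
  apply in_map_iff in Hpa. destruct Hpa as (X & <- & HX). simpl in H.
  apply in_map_iff in H. destruct H as (qb & <- & H). apply in_map_iff in H. destruct H as (qy & <- & H).
  simpl. apply Rmult_le_pos. apply inv_nonneg, pos_INR. apply (hvl_nonneg n X qy H). Qed.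

Lemma Ex_step P f : Ex (smo_step F n w P) f =
  / INR (length P) * lsum P (fun X => Ex (hvl_prime n X) (fun Y => f (update F n w P Y))).
Proof. unfold smo_step. rewrite Ex_dbind.
  assert (forall c (l : list stree) (h : stree -> R), Ex (map (fun X => (c, X)) l) h = c * lsum l h).
  { intros c l h. induction l. unfold Ex, lsum; simpl; lra. simpl. rewrite Ex_cons, lsum_cons, IHl. simpl. lra. }
  rewrite H. f_equal. apply lsum_ext. intros X _.
  apply (Ex_map (update F n w P) (hvl_prime n X) f).
Qed.

Lemma step_mass P : P <> [] -> Ex (smo_step F n w P) (fun _ => 1) = 1.
Proof. intros Hne. rewrite Ex_step. rewrite (lsum_ext _ _ (fun _ => 1)). rewrite lsum_const.
  assert (0 < INR (length P)). apply INR_gt0. destruct P; simpl; [congruence|lia]. field. lra.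
  intros. apply hvl_mass; auto. Qed.

Lemma GD {A} (d : Defs.dist A) (g ind : A -> R) G c p : nonnegd d -> Ex d (fun _ => 1) = 1 -> 0 <= c ->
  (forall pa, In pa d -> g (snd pa) <= G - c * ind (snd pa)) -> p <= Ex d ind -> Ex d g <= G - c * p.
Proof. intros Hd Hm Hc H Hp.
  assert (Ex d g <= Ex d (fun x => (- c) * ind x + G)) by (apply Ex_le; auto; intros; specialize (H pa H0); lra).
  rewrite Ex_lin, Hm in H0. nra. Qed.

Lemma step_lower P Z h : In Z P -> (forall Y, 0 <= h Y) ->
  / INR (length P) * Ex (hvl_prime n Z) (fun Y => h (update F n w P Y)) <= Ex (smo_step F n w P) h.
Proof. intros HZ Hh. rewrite Ex_step. apply Rmult_le_compat_l. apply inv_nonneg, pos_INR.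
  apply lsum_ge_one with (f := fun X => Ex (hvl_prime n X) (fun Y => h (update F n w P Y))); auto.
  intros. apply Ex_hvl_ge0; auto. Qed.

Lemma find_k P j : covered F n w P 0 -> (j <= n)%nat -> ~ covered F n w P j ->
  exists k, (k < n)%nat /\ covered F n w P k /\ ~ covered F n w P (S k).
Proof. induction j; intros H0 Hj Hc. contradiction.
  destruct (classic (covered F n w P j)). exists j. repeat split; auto; lia.
  apply IHj; auto; lia. Qed.

Lemma support_facts P qP : Inv n P -> In qP (smo_step F n w P) ->
  Inv n (snd qP) /\ (minl (snd qP) <= minl P)%nat /\ (forall j, covered F n w P j -> covered F n w (snd qP) j).
Proof.
  intros HI H. destruct (step_support P qP H) as (X & Y & HX & Hc & ->).
  destruct HI as [Hne [Hg Hd]] eqn:EI.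
  assert (HvY : valid n Y) by (apply child_valid with X; auto; apply Hg; auto).
  split. apply Inv_update with X; auto. split.
  - destruct (minl_ach P Hne) as (Z0 & HZ0 & HZe). intros; apply good_nl; auto.
    destruct (U_keep F n w P Y Z0 HZ0) as [H1|[H1 H2]].
    + rewrite <- HZe. apply minl_le; auto.
    + destruct H2 as [_ H2]. apply cplx_le in H2. pose proof (minl_le _ _ H1). lia.
  - intros j. apply persist; auto.
Qed.

Lemma drift P : Inv n P -> ~ covers_front F n w P -> Ex (smo_step F n w P) gP <= gP P - 1.
Proof.
  intros HI Hcov. pose proof HI as [Hne [Hg Hd]].
  pose proof (Inv_length n P HI) as HlP.
  assert (HlP0 : 0 < INR (length P)) by (apply INR_gt0; destruct P; simpl; [congruence|lia]).
  apply le_INR in HlP.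
  assert (Hcnt : (cnt P < S n)%nat). { pose proof (cnt_le P). destruct (Nat.eq_dec (cnt P) (S n)).
    exfalso; apply Hcov, cnt_full; auto. lia. }
  pose proof (step_mass P Hne) as Hm. pose proof (step_nonneg P) as Hnn.
  destruct (Nat.eq_dec (minl P) 0) as [Hm0|Hm0].
  -
    destruct (minl_ach P Hne) as (Z0 & HZ0 & HZe). intros; apply good_nl; auto.
    rewrite Hm0 in HZe. apply nl0 in HZe. subst Z0.
    assert (Hc0 : covered F n w P 0) by (exists None; split; auto; split; auto; apply none_pareto).
    assert (Hex : exists j, (j <= n)%nat /\ ~ covered F n w P j).
    { apply NNPP. intros Hno. apply Hcov. apply all_covered_front. intros j Hj. apply NNPP. intros Hj'. apply Hno. exists j; auto. }
    destruct Hex as (j & Hj & Hjc). destruct (find_k P j Hc0 Hj Hjc) as (k & Hk & Hck & Hnck).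
    destruct Hck as (Z & HZ & [HPZ HnZ]).
    assert (HgZ := Hg Z HZ).
    assert (HVd : NoDup (map fst (leaflist Z))) by apply HgZ.
    assert (HVl : length (map fst (leaflist Z)) = k) by (rewrite length_map, leaflist_length; auto).
    destruct (min_missing n (map fst (leaflist Z))) as (v & Hv & HvV & Hvmin). lia. auto.
    set (ind := fun P' : list stree => if decb (covered F n w P' (S k)) then 1 else 0).
    assert (Hind0 : forall P', 0 <= ind P'). { intros; unfold ind; destruct decb; lra. }
    assert (Hchild : forall Y a c, leaflist Z = a ++ c -> leaflist Y = a ++ (v, true) :: c ->
                ind (update F n w P Y) = 1).
    { intros Y a c H1 H2.
      assert (HgY : good n Y). { apply ins_good with Z a c (v, true); auto. simpl. rewrite <- H1; auto. }
      assert (HnY : nl Y = S (nl Z)). { rewrite <- !leaflist_length, H1, H2, !length_app. simpl. lia. }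
      assert (HPY : pareto_optimal F n w Y).
      { apply build with Z v; auto.
        - intros i Hi Hin. apply (weights_dec n w Hw); auto.
        - intros i. rewrite H1, H2. split.
          + intros Hin. apply in_app_or in Hin. destruct Hin as [Hin|[Hin|Hin]].
            right; apply in_or_app; auto. left; inversion Hin; auto. right; apply in_or_app; auto.
          + intros [->|Hin]. apply in_or_app; simpl; auto. apply in_app_or in Hin. apply in_or_app.
            destruct Hin; simpl; auto. }
      assert (Hacc : accepted F n w P Y).
      { intros (W & HW & Hs). destruct HPY as [_ HPY]. apply HPY. exists W. split; auto. apply Hg; auto. }
      unfold ind. replace (decb (covered F n w (update F n w P Y) (S k))) with true. auto.
      symmetry. apply (proj2 (decb_spec _)). exists Y. split. apply U_acc; auto. split; auto. lia. }
    assert (Hlow : third * / INR (2 * n) <= Ex (hvl_prime n Z) (fun Y => ind (update F n w P Y))).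
    { apply (ins_bound n Hn Z _ v); auto. destruct Z as [t|].
      - intros kk b Hkk. destruct (at_node_ins t kk (v, true) b Hkk) as (a & c & H1 & H2 & H3).
        apply Hchild with a c; auto.
      - apply Hchild with [] []; auto. }
    pose proof (step_lower P Z ind HZ Hind0) as Hsl.
    apply Rle_trans with (gP P - INR (6 * n * S n) * (/ INR (length P) * (third * / INR (2 * n)))).
    + apply GD with ind; auto. apply pos_INR.
      * intros qP HqP. destruct (support_facts P qP HI HqP) as (_ & Hmin & Hcv).
        unfold gP. assert (minl (snd qP) = 0%nat) by lia. rewrite H, Hm0.
        assert (cnt P + (if decb (covered F n w (snd qP) (S k)) then 1 else 0) <= cnt (snd qP))%nat.
        { destruct (decb (covered F n w (snd qP) (S k))) eqn:E.
          - apply (proj1 (decb_spec _)) in E. rewrite Nat.add_1_r. apply flen_strict with (S k).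
            intros x _ Hx. apply (proj2 (decb_spec _)). apply Hcv. apply (proj1 (decb_spec _)); auto.
            apply in_seq; lia. apply (proj2 (decb_false _)); auto. apply (proj2 (decb_spec _)); auto.
          - rewrite Nat.add_0_r. apply flen_mono. intros x _ Hx. apply (proj2 (decb_spec _)). apply Hcv.
            apply (proj1 (decb_spec _)); auto. }
        apply le_INR in H0. rewrite plus_INR in H0. unfold ind.
        pose proof (pos_INR (6 * n * S n)).
        destruct (decb (covered F n w (snd qP) (S k))); simpl in H0; nra.
      * apply Rle_trans with (/ INR (length P) * Ex (hvl_prime n Z) (fun Y => ind (update F n w P Y))); auto.
        apply Rmult_le_compat_l; auto. apply inv_nonneg, pos_INR.
    + assert (1 <= INR (6 * n * S n) * (/ INR (length P) * (third * / INR (2 * n)))).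
      { rewrite !mult_INR. unfold third. pose proof INR2n n Hn. rewrite mult_INR in H.
        assert (0 < INR n) by (apply INR_gt0; auto).
        replace (INR 6 * INR n * INR (S n) * (/ INR (length P) * (/ 3 * / (INR 2 * INR n))))
          with (INR (S n) / INR (length P)). 
        apply Rmult_le_reg_r with (INR (length P)); auto. unfold Rdiv. rewrite Rmult_assoc, Rinv_l; lra.
        simpl. field. lra. }
      lra.
  -
    destruct (minl_ach P Hne) as (Z & HZ & HZe). intros; apply good_nl; auto.
    destruct Z as [t|]. 2: { simpl in HZe. lia. }
    set (ind := fun P' : list stree => if decb (minl P' < minl P)%nat then 1 else 0).
    assert (Hind0 : forall P', 0 <= ind P'). { intros; unfold ind; destruct decb; lra. }
    assert (Hlow : third <= Ex (hvl_prime n (Some t)) (fun Y => ind (update F n w P Y))).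
    { apply del_bound; auto. intros k Hk. destruct (del_leaf_leaves t k Hk) as (a & x & b & H1 & H2).
      set (Y := del_leaf t k) in *.
      assert (HnY : (nl Y + 1 = nleaves t)%nat). { rewrite <- leaflist_length, H2, <- leaves_length, H1, !length_app. simpl. lia. }
      assert (Hacc : accepted F n w P Y).
      { intros (W & HW & [[_ Hs] _]). apply cplx_le in Hs. pose proof (minl_le P W HW). simpl in HZe. lia. }
      unfold ind. replace (decb (minl (update F n w P Y) < minl P)%nat) with true. auto.
      symmetry. apply (proj2 (decb_spec _)). pose proof (minl_le _ _ (U_acc F n w P Y Hacc)). simpl in HZe. lia. }
    pose proof (step_lower P (Some t) ind HZ Hind0) as Hsl.
    apply Rle_trans with (gP P - INR (3 * S n) * (/ INR (length P) * third)).
    + apply GD with ind; auto. apply pos_INR.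
      * intros qP HqP. destruct (support_facts P qP HI HqP) as (_ & Hmin & Hcv).
        unfold gP.
        assert (cnt P <= cnt (snd qP))%nat.
        { apply flen_mono. intros x _ Hx. apply (proj2 (decb_spec _)). apply Hcv.
          apply (proj1 (decb_spec _)); auto. }
        apply le_INR in H. pose proof (pos_INR (6 * n * S n)). pose proof (pos_INR (3 * S n)).
        unfold ind. destruct (decb (minl (snd qP) < minl P)%nat) eqn:E.
        apply (proj1 (decb_spec _)) in E. assert (INR (minl (snd qP)) + 1 <= INR (minl P)).
        { rewrite <- S_INR. apply le_INR. lia. } nra.
        apply le_INR in Hmin. nra.
      * apply Rle_trans with (/ INR (length P) * Ex (hvl_prime n (Some t)) (fun Y => ind (update F n w P Y))); auto.
        apply Rmult_le_compat_l; auto. apply inv_nonneg, pos_INR.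
    + assert (1 <= INR (3 * S n) * (/ INR (length P) * third)).
      { rewrite !mult_INR. unfold third.
        replace (INR 3 * INR (S n) * (/ INR (length P) * / 3)) with (INR (S n) / INR (length P)).
        apply Rmult_le_reg_r with (INR (length P)); auto. unfold Rdiv. rewrite Rmult_assoc, Rinv_l; lra.
        simpl. field. lra. }
      lra.
Qed.
End S.

Lemma nonred_good F n X : valid n X -> nonredundant F n X -> good n X.
Proof.
  intros Hv [->|H].
  - split; [|split]. intros l []. intros l []. constructor.
  - rewrite cplx_nl in H. unfold nexpr in H.
    set (E := filter (expressed F X) (seq 0 n)) in *.
    assert (HEd : NoDup E) by (apply NoDup_filter, seq_NoDup).
    assert (HEi : incl E (map fst (filter snd (leaflist X)))).
    { intros i Hi. apply filter_In in Hi. destruct Hi as [_ Hi]. apply G1 in Hi.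
      apply in_map_iff. exists (i, true). split; auto. apply filter_In; auto. }
    pose proof (NoDup_incl_length HEd HEi) as L1. rewrite length_map in L1.
    pose proof (filter_length_le snd (leaflist X)) as L2. rewrite leaflist_length in L2.
    assert (Hnl : (length E = nl X)%nat) by (destruct X; simpl in *; [pose proof (nleaves_pos n0)|]; lia).
    assert (Hall : length (filter snd (leaflist X)) = length (leaflist X)) by (rewrite leaflist_length; lia).
    assert (Hp : allpos (leaflist X)) by (intros l Hl; apply (flen_full _ _ Hall); auto).
    split; [auto|split; auto].
    apply NoDup_incl_NoDup with E; auto. rewrite length_map, leaflist_length; lia.
    intros i Hi. apply HEi in Hi. apply in_map_iff in Hi. destruct Hi as (l & <- & Hl).
    apply filter_In in Hl. apply in_map; tauto.
Qed.

Lemma Ex_zero {A} (d : Defs.dist A) : Ex d (fun _ => 0) = 0.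
Proof. induction d. reflexivity. rewrite Ex_cons, IHd. lra. Qed.
Lemma Ex_minus {A} (d : Defs.dist A) f g : Ex d (fun x => f x - g x) = Ex d f - Ex d g.
Proof. induction d. unfold Ex; simpl; lra. rewrite !Ex_cons, IHd. lra. Qed.

Section S.
Variable F : fitness.
Variable n : nat.
Variable w : nat -> R.
Hypothesis Hw : weights_ok n w.
Hypothesis Hn : (1 <= n)%nat.
Variable X0 : stree.
Hypothesis HX0 : good n X0.

Definition hs (s : list stree * bool) : R := if snd s then 0 else gP F n w (fst s).
Definition SInv (s : list stree * bool) := Inv n (fst s) /\ (snd s = false -> coveredb F n w (fst s) = false).
Definition nexts (s : list stree * bool) : Defs.dist (list stree * bool) :=
  map (fun qP : R * list stree => (fst qP, (snd qP, orb (snd s) (coveredb F n w (snd qP))))) (smo_step F n w (fst s)).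

Lemma sd_S t : state_dist F n w X0 (S t) = dbind (state_dist F n w X0 t) nexts.
Proof. reflexivity. Qed.

Lemma sd_inv t : nonnegd (state_dist F n w X0 t) /\ forall pa, In pa (state_dist F n w X0 t) -> SInv (snd pa).
Proof.
  induction t as [|t [IH1 IH2]].
  - simpl. split. intros pa [<-|[]]; simpl; lra.
    intros pa [<-|[]]. simpl. split. split. discriminate. split. intros Z [<-|[]]; auto.
    constructor; auto. constructor. auto.
  - rewrite sd_S. unfold dbind. split.
    + intros qb H. apply in_flat_map in H. destruct H as (pa & Hpa & H). apply in_map_iff in H.
      destruct H as (q & <- & H). simpl. apply Rmult_le_pos. apply IH1; auto.
      unfold nexts in H. apply in_map_iff in H. destruct H as (qP & <- & HqP). simpl. apply (step_nonneg F n w _ _ HqP).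
    + intros qb H. apply in_flat_map in H. destruct H as (pa & Hpa & H). apply in_map_iff in H.
      destruct H as (q & <- & H). simpl. unfold nexts in H. apply in_map_iff in H.
      destruct H as (qP & <- & HqP). simpl. destruct (IH2 pa Hpa) as [HI _].
      split. apply (support_facts F n w Hw Hn (fst (snd pa)) qP HI HqP).
      simpl. intros Hb. apply orb_false_iff in Hb. tauto.
Qed.

Lemma hs_ge0 s : 0 <= hs s.
Proof. unfold hs. destruct (snd s). lra. apply gP_ge0. Qed.

Lemma drift_s s : SInv s -> Ex (nexts s) hs <= hs s - (if snd s then 0 else 1).
Proof.
  intros [HI Hc]. unfold nexts. rewrite (Ex_map (fun P' => (P', snd s || coveredb F n w P')) _ hs).
  destruct s as [P b]. simpl in *. destruct b; simpl.
  - unfold hs. simpl. rewrite Ex_zero. lra.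
  - apply Rle_trans with (Ex (smo_step F n w P) (gP F n w)).
    + apply Ex_le. apply step_nonneg. intros pa _. unfold hs. simpl. destruct (coveredb F n w (snd pa)). apply gP_ge0. lra.
    + unfold hs; simpl. apply (drift F n w Hw Hn); auto. specialize (Hc eq_refl). unfold coveredb in Hc.
      apply (proj1 (decb_false _)) in Hc. auto.
Qed.

Lemma pnd_eq t : prob_not_done F n w X0 t = Ex (state_dist F n w X0 t) (fun s => if snd s then 0 else 1).
Proof. unfold prob_not_done. generalize (state_dist F n w X0 t). induction d. reflexivity.
  simpl. rewrite Ex_cons, IHd. destruct (snd (snd a)); lra. Qed.

Lemma telescope N : exp_time_partial F n w X0 N + Ex (state_dist F n w X0 N) hs <= hs ([X0], coveredb F n w [X0]).
Proof.
  induction N.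
  - unfold exp_time_partial. simpl. rewrite Ex_cons, Ex_nil. unfold sumR. simpl. lra.
  - unfold exp_time_partial in *. rewrite sumR_S, sd_S, Ex_dbind.
    destruct (sd_inv N) as [Hnn Hinv].
    assert (Ex (state_dist F n w X0 N) (fun s => Ex (nexts s) hs) <=
            Ex (state_dist F n w X0 N) (fun s => hs s - (if snd s then 0 else 1))).
    { apply Ex_le; auto. intros pa Hpa. apply drift_s. apply Hinv; auto. }
    rewrite Ex_minus in H. rewrite <- pnd_eq in H. lra.
Qed.

Lemma final_bound N : exp_time_partial F n w X0 N <= 30 * INR n ^ 3.
Proof.
  pose proof (telescope N). destruct (sd_inv N) as [Hnn _].
  assert (0 <= Ex (state_dist F n w X0 N) hs) by (apply Ex_ge0; auto; intros; apply hs_ge0).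
  assert (hs ([X0], coveredb F n w [X0]) <= gP F n w [X0]).
  { unfold hs. simpl. destruct (coveredb F n w [X0]). apply gP_ge0. lra. }
  assert (gP F n w [X0] <= 30 * INR n ^ 3).
  { unfold gP. pose proof (minl_le_n n Hn [X0]). apply le_INR in H2.
    pose proof (pos_INR (cnt F n w [X0])).
    assert (1 <= INR n) by (apply (le_INR 1); auto).
    assert (E1 : INR (3 * S n) = 3 * (INR n + 1)) by (rewrite mult_INR, (S_INR n); replace (INR 3) with 3 by (simpl; lra); ring).
    assert (E2 : INR (6 * n * S n) = 6 * INR n * (INR n + 1)) by (rewrite !mult_INR, (S_INR n); replace (INR 6) with 6 by (simpl; lra); ring).
    rewrite E1, E2, (S_INR n).
    assert (INR n * (INR n + 1) * (INR n + 1) <= 4 * INR n ^ 3) by nra.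
    assert ((INR n + 1) * INR (minl n [X0]) <= 2 * INR n ^ 3) by nra.
    assert (0 <= INR n * (INR n + 1)) by nra.
    nra. }
  lra.
Qed.
End S.

Theorem theorem6 :
  exists c : R, 0 < c /\
    forall (F : fitness) (n : nat) (w : nat -> R) (X0 : stree),
      (1 <= n)%nat -> weights_ok n w ->
      valid n X0 -> nonredundant F n X0 ->
      forall N : nat, exp_time_partial F n w X0 N <= c * INR n ^ 3.
Proof.
  exists 30. split. lra. intros F n w X0 Hn Hw Hv Hnr N.
  apply final_bound; auto. apply nonred_good with F; auto.
Qed.
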